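(* For every integer $n\ge3$, let $\mathcal{S}_n$ be the regular $n$-gon state space. Then $\lambda_{max}(\mathcal{S}_n)=2$ when $n$ is even and $\lambda_{max}(\mathcal{S}_n)=1+\sec(\pi/n)>2$ when $n$ is odd.
   Context: The regular $n$-gon state space $\mathcal{S}_n\subset\mathbb{R}^3$ is the convex hull of the points $s_j=(r_n\cos(2j\pi/n),\,r_n\sin(2j\pi/n),\,1)^T$, $j=1,\ldots,n$, where $r_n=\sqrt{\sec(\pi/n)}$. Effects are linear functionals $e$ on $\mathbb{R}^3$ with $0\le e(s)\le1$ for all $s\in\mathcal{S}_n$; the unit effect is $u=(0,0,1)$ (acting by the dot product). For a linear functional $f$, $\|f\|=\max_{s\in\mathcal{S}_n}|f(s)|$. A measurement with finite outcome set $\Omega$ is a map $x\mapsto\mathsf{M}_x$ to effects with $\sum_x\mathsf{M}_x=u$; its decoding power is $\lambda_{max}(\mathsf{M})=\sum_x\|\mathsf{M}_x\|$, and the information storability $\lambda_{max}(\mathcal{S}_n)$ is the supremum of $\lambda_{max}(\mathsf{M})$ over all such measurements. *)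

(* Defs.v *)
From HB Require Import structures.
From mathcomp Require Import all_boot all_order all_algebra.
From mathcomp Require Import all_classical all_reals all_analysis.
Set Implicit Arguments. Unset Strict Implicit. Unset Printing Implicit Defensive.
Import Order.TTheory GRing.Theory Num.Theory.
Local Open Scope ring_scope.
Local Open Scope classical_set_scope.

Section Ngon.
Variable R : realType.

(* action of a linear functional (given by its coefficient vector) on R^3 *)
Definition dot (f s : 'rV[R]_3) : R := \sum_(i < 3) f 0 i * s 0 i.

Definition rn (n : nat) : R := Num.sqrt (1 / cos (pi / n%:R)).

Definition vertex (n j : nat) : 'rV[R]_3 :=
  \row_(i < 3) match val i with
               | 0 => rn n * cos (2 * j%:R * pi / n%:R)
               | 1 => rn n * sin (2 * j%:R * pi / n%:R)
               | _ => 1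
               end.

Definition state_space (n : nat) : set 'rV[R]_3 :=
  [set s | exists c : 'I_n -> R,
      (forall j, 0 <= c j) /\ \sum_(j < n) c j = 1 /\
      s = \sum_(j < n) c j *: vertex n j.+1].

Definition unit_effect : 'rV[R]_3 := \row_(i < 3) (if val i == 2%N then 1 else 0).

Definition is_effect (n : nat) (e : 'rV[R]_3) : Prop :=
  forall s, state_space n s -> 0 <= dot e s <= 1.

(* ||f|| = max_{s in S_n} |f(s)| (the max is attained; written as a sup) *)
Definition fnorm (n : nat) (f : 'rV[R]_3) : R :=
  sup [set `|dot f s| | s in state_space n].

Definition is_measurement (n k : nat) (M : 'I_k -> 'rV[R]_3) : Prop :=
  (forall x, is_effect n (M x)) /\ \sum_(x < k) M x = unit_effect.

Definition decoding_power (n k : nat) (M : 'I_k -> 'rV[R]_3) : R :=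
  \sum_(x < k) fnorm n (M x).

Definition storability (n : nat) : R :=
  sup [set l | exists (k : nat) (M : 'I_k -> 'rV[R]_3),
          is_measurement n M /\ l = decoding_power n M].

End Ngon.

(* Main.v *)
Require Import Defs.
From HB Require Import structures.
From mathcomp Require Import all_boot all_order all_algebra.
From mathcomp Require Import all_classical all_reals all_analysis.
From mathcomp Require Import ring lra zify.
Set Implicit Arguments. Unset Strict Implicit. Unset Printing Implicit Defensive.
Import Order.TTheory GRing.Theory Num.Theory.
Local Open Scope ring_scope.
Local Open Scope classical_set_scope.

Section Aux.
Variable R : realType.
Implicit Types (f s e : 'rV[R]_3).

Definition i0 : 'I_3 := Ordinal (isT : (0 < 3)%N).
Definition i1 : 'I_3 := Ordinal (isT : (1 < 3)%N).
Definition i2 : 'I_3 := Ordinal (isT : (2 < 3)%N).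

Lemma dot3 f s : dot f s = f 0 i0 * s 0 i0 + f 0 i1 * s 0 i1 + f 0 i2 * s 0 i2.
Proof.
rewrite /dot !big_ord_recr big_ord0 /= GRing.add0r.
by congr (_ * _ + _ * _ + _ * _); congr (_ _ _); apply: val_inj.
Qed.

Definition th (n j : nat) : R := 2 * j%:R * pi / n%:R.

Lemma vx n j : vertex R n j 0 i0 = rn R n * cos (th n j). Proof. by rewrite mxE. Qed.
Lemma vy n j : vertex R n j 0 i1 = rn R n * sin (th n j). Proof. by rewrite mxE. Qed.
Lemma vz n j : vertex R n j 0 i2 = 1. Proof. by rewrite mxE. Qed.

Lemma dotv f n j : dot f (vertex R n j) =
  f 0 i0 * (rn R n * cos (th n j)) + f 0 i1 * (rn R n * sin (th n j)) + f 0 i2.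
Proof. by rewrite dot3 vx vy vz mulr1. Qed.

Lemma dot_sumr f n (c : 'I_n -> R) (v : 'I_n -> 'rV[R]_3) :
  dot f (\sum_(j < n) c j *: v j) = \sum_(j < n) c j * dot f (v j).
Proof.
rewrite /dot.
under eq_bigr => i _ do rewrite summxE mulr_sumr.
rewrite exchange_big /=; apply: eq_bigr => j _; rewrite mulr_sumr.
by apply: eq_bigr => i _; rewrite mxE mulrCA.
Qed.

Lemma dot_suml k (M : 'I_k -> 'rV[R]_3) s :
  dot (\sum_(x < k) M x) s = \sum_(x < k) dot (M x) s.
Proof.
rewrite /dot.
under eq_bigr => i _ do rewrite summxE mulr_suml.
by rewrite exchange_big.
Qed.

Lemma ue_z : unit_effect R 0 i2 = 1. Proof. by rewrite mxE. Qed.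

Lemma dot_u s : dot (unit_effect R) s = s 0 i2.
Proof. by rewrite dot3 !mxE /= !mul0r !add0r mul1r. Qed.

Lemma ss_z n s : @state_space R n s -> s 0 i2 = 1.
Proof.
move=> [c [c0 [c1 ->]]]; rewrite summxE -c1; apply: eq_bigr => j _.
by rewrite mxE vz mulr1.
Qed.

Lemma ss_vertex_ord n (j : 'I_n) : @state_space R n (vertex R n j.+1).
Proof.
exists (fun i => if i == j then 1 else 0); split; first by move=> i; case: ifP.
split.
  by rewrite (bigD1 j) //= eqxx big1 ?addr0 // => i /negbTE ->.
rewrite (bigD1 j) //= eqxx scale1r big1 ?addr0 // => i /negbTE ->.
by rewrite scale0r.
Qed.

Lemma th_per n j : (0 < n)%N -> th n (j + n) = th n j + pi *+ 2.
Proof.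
move=> n0; rewrite /th natrD -mulr_natr; field.
by rewrite pnatr_eq0 -lt0n.
Qed.

Lemma vertex_per n j : (0 < n)%N -> vertex R n (j + n) = vertex R n j.
Proof.
move=> n0; apply/rowP => i; rewrite !mxE; have := th_per j n0; rewrite /th => ->; rewrite cosD2pi sinD2pi.
by [].
Qed.


Lemma vertex_mod n m : (0 < n)%N -> vertex R n m = vertex R n (m %% n).
Proof.
move=> n0; rewrite {1}(divn_eq m n); elim: (m %/ n)%N => [|q IH]; first by rewrite mul0n add0n.
by rewrite mulSn -addnA addnC vertex_per // addnC.
Qed.

Lemma ss_vertex n m : (0 < n)%N -> @state_space R n (vertex R n m).
Proof.
move=> n0; rewrite vertex_mod //.
case E: (m %% n)%N => [|r].
  have -> : vertex R n 0 = vertex R n n.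
    by rewrite -(vertex_per 0 n0) add0n.
  have h : (n.-1 < n)%N by rewrite prednK.
  by have := ss_vertex_ord (Ordinal h); rewrite /= prednK.
have h : (r < n)%N.
  have : (m %% n < n)%N by rewrite ltn_mod.
  by rewrite E; exact: ltnW.
exact: (ss_vertex_ord (Ordinal h)).
Qed.

Lemma eff_ge0 n e m : (0 < n)%N -> is_effect n e -> 0 <= dot e (vertex R n m).
Proof. by move=> n0 /(_ _ (ss_vertex m n0))/andP[]. Qed.

Lemma conv_le n e s B : @state_space R n s -> (forall m, dot e (vertex R n m) <= B) ->
  dot e s <= B.
Proof.
move=> [c [c0 [c1 ->]]] hB; rewrite dot_sumr -[B]mul1r -c1 mulr_suml.
apply: ler_sum => j _. have := @ler_wpM2l _ (c j) (c0 j) _ _ (hB j.+1). exact.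
Qed.

Lemma conv_ge n e s B : @state_space R n s -> (forall m, B <= dot e (vertex R n m)) ->
  B <= dot e s.
Proof.
move=> [c [c0 [c1 ->]]] hB; rewrite dot_sumr -[B]mul1r -c1 mulr_suml.
apply: ler_sum => j _. have := @ler_wpM2l _ (c j) (c0 j) _ _ (hB j.+1). exact.
Qed.

Lemma fnorm_le n e B : (0 < n)%N -> is_effect n e ->
  (forall m, dot e (vertex R n m) <= B) -> fnorm n e <= B.
Proof.
move=> n0 he hB; apply: ge_sup.
  by exists `|dot e (vertex R n 1)|; exists (vertex R n 1) => //; exact: ss_vertex.
move=> _ [s hs <-]; have /andP[h0 _] := he s hs.
by rewrite ger0_norm //; exact: conv_le hs hB.
Qed.

Lemma fnorm_ge n e m : (0 < n)%N -> is_effect n e ->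
  dot e (vertex R n m) <= fnorm n e.
Proof.
move=> n0 he; have /andP[h0 h1] := he _ (ss_vertex m n0).
rewrite -(ger0_norm h0); apply: sup_upper_bound; last by exists (vertex R n m) => //; exact: ss_vertex.
split; first by exists `|dot e (vertex R n m)|; exists (vertex R n m) => //; exact: ss_vertex.
exists 1 => _ [s hs <-]; have /andP[g0 g1] := he s hs.
by rewrite ger0_norm.
Qed.

Lemma meas_of n k (M : 'I_k -> 'rV[R]_3) : (0 < n)%N ->
  (forall x m, 0 <= dot (M x) (vertex R n m)) -> \sum_(x < k) M x = unit_effect R ->
  is_measurement n M.
Proof.
move=> n0 hM hs; split => // x s ss; apply/andP; split.
  by apply: (conv_ge ss).
have : dot (\sum_(x < k) M x) s = 1 by rewrite hs dot_u (ss_z ss).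
rewrite dot_suml (bigD1 x) //= => <-; rewrite lerDl sumr_ge0 // => y _.
exact: (conv_ge ss).
Qed.

Lemma ub_gen n K k (M : 'I_k -> 'rV[R]_3) : (0 < n)%N ->
  (forall e, is_effect n e -> forall m, dot e (vertex R n m) <= K * e 0 i2) ->
  is_measurement n M -> decoding_power n M <= K.
Proof.
move=> n0 hK [he hs].
apply: (@le_trans _ _ (\sum_(x < k) K * M x 0 i2)).
  by apply: ler_sum => x _; apply: fnorm_le => //; exact: hK.
by rewrite -mulr_sumr -summxE hs ue_z mulr1.
Qed.

Lemma stor_eq n K : (0 < n)%N ->
  (forall e, is_effect n e -> forall m, dot e (vertex R n m) <= K * e 0 i2) ->
  (exists k (M : 'I_k -> 'rV[R]_3), is_measurement n M /\ K <= decoding_power n M) ->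
  storability R n = K.
Proof.
move=> n0 hK [k [M [hM hle]]].
have ub : ubound [set l | exists (k : nat) (M : 'I_k -> 'rV[R]_3),
          is_measurement n M /\ l = decoding_power n M] K.
  by move=> _ [k' [M' [hM' ->]]]; exact: ub_gen hK hM'.
apply/eqP; rewrite eq_le; apply/andP; split.
  by apply: ge_sup => //; exists (decoding_power n M); exists k, M.
apply: (le_trans hle); apply: sup_upper_bound; last by exists k, M.
by split; [exists (decoding_power n M); exists k, M | exists K].
Qed.


Definition al (n : nat) : R := pi / n%:R.

Lemma al_facts n : (3 <= n)%N ->
  [/\ 0 < al n, al n < pi / 2, 0 < cos (al n), cos (al n) < 1 & 0 < sin (al n)].
Proof.
move=> n3.
have n0 : (0 : R) < n%:R by rewrite ltr0n; apply: leq_trans n3.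
have n3' : (3 : R) <= n%:R by rewrite ler_nat.
have a0 : 0 < al n by rewrite /al divr_gt0 // pi_gt0.
have api : al n < pi / 2.
  rewrite /al ltr_pM2l ?pi_gt0 // ltf_pV2 ?posrE //; lra.
have ac0 : 0 < cos (al n).
  apply: cos_gt0_pihalf; rewrite api andbT; have := pi_gt0 R; lra.
split => //.
- rewrite -cos0; rewrite ltr_cos ?in_itv /= ?lexx ?pi_ge0 //.
  rewrite (ltW a0) /=; apply: ltW; apply: (lt_trans api); have := pi_gt0 R; lra.
- apply: sin_gt0_pi; rewrite a0 /=; apply: (lt_trans api); have := pi_gt0 R; lra.
Qed.

Lemma rn_gt0 n : (3 <= n)%N -> 0 < rn R n.
Proof.
move=> n3; have [_ _ c0 _ _] := al_facts n3.
by rewrite /rn sqrtr_gt0 divr_gt0.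
Qed.


Lemma th_half k m : (0 < k)%N -> th (k.*2) (m + k) = th (k.*2) m + pi.
Proof.
move=> k0; have D : (k.*2)%:R = 2 * k%:R :> R by rewrite -mul2n natrM.
rewrite /th natrD D; field.
by rewrite pnatr_eq0 -lt0n.
Qed.

Lemma th_odd1 k m : th (k.*2.+1) (m + k) = (th (k.*2.+1) m + pi) - al (k.*2.+1).
Proof.
have D : (k.*2.+1)%:R = 2 * k%:R + 1 :> R by rewrite -addn1 natrD -mul2n natrM.
rewrite /th /al natrD D; field.
by rewrite -D pnatr_eq0.
Qed.

Lemma th_odd2 k m : th (k.*2.+1) (m + k.+1) = (th (k.*2.+1) m + pi) + al (k.*2.+1).
Proof.
have D : (k.*2.+1)%:R = 2 * k%:R + 1 :> R by rewrite -addn1 natrD -mul2n natrM.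
rewrite /th /al natrD D -(addn1 k) natrD; field.
by rewrite -D pnatr_eq0.
Qed.

Lemma ub_even k e : (0 < k)%N -> is_effect (k.*2) e ->
  forall m, dot e (vertex R (k.*2) m) <= 2 * e 0 i2.
Proof.
move=> k0 he m.
have n0 : (0 < k.*2)%N by rewrite double_gt0.
have h := eff_ge0 (m + k) n0 he.
have E : dot e (vertex R (k.*2) m) + dot e (vertex R (k.*2) (m + k)) = 2 * e 0 i2.
  by rewrite !dotv th_half // cosDpi sinDpi; ring.
lra.
Qed.

Lemma ub_odd k e : (1 <= k)%N -> is_effect (k.*2.+1) e ->
  forall m, dot e (vertex R (k.*2.+1) m) <= (1 + 1 / cos (pi / (k.*2.+1)%:R)) * e 0 i2.
Proof.
move=> k1 he m.
have n3 : (3 <= k.*2.+1)%N by rewrite ltnS -(doubleS 0) leq_double.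
have [_ _ t0 _ _] := al_facts n3.
have h1 := eff_ge0 (m + k) (ltn0Sn _) he.
have h2 := eff_ge0 (m + k.+1) (ltn0Sn _) he.
set t := cos (pi / (k.*2.+1)%:R) in t0 *.
have E : dot e (vertex R (k.*2.+1) (m + k)) + dot e (vertex R (k.*2.+1) (m + k.+1))
   + 2 * t * dot e (vertex R (k.*2.+1) m) = 2 * (1 + t) * e 0 i2.
  rewrite !dotv th_odd1 th_odd2; set A := th _ m + pi.
  rewrite cosB sinB cosD sinD /A cosDpi sinDpi /t /al; ring.
rewrite -(ler_pM2l t0).
have -> : t * ((1 + 1 / t) * e 0 i2) = (t + 1) * e 0 i2.
  by field; rewrite gt_eqF.
nra.
Qed.


Definition mkrow (a b c : R) : 'rV[R]_3 :=
  \row_(i < 3) (if val i == 0%N then a else if val i == 1%N then b else c).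

Lemma dot_mkrow a b c n m : dot (mkrow a b c) (vertex R n m) =
  a * (rn R n * cos (th n m)) + b * (rn R n * sin (th n m)) + c.
Proof. by rewrite dotv !mxE. Qed.

Lemma lb_even k : (2 <= k)%N ->
  exists k' (M : 'I_k' -> 'rV[R]_3), is_measurement (k.*2) M /\ 2 <= decoding_power (k.*2) M.
Proof.
move=> k2.
have k0 : (0 < k)%N by apply: leq_trans k2.
have n0 : (0 < k.*2)%N by rewrite double_gt0.
have n3 : (3 <= k.*2)%N by rewrite -(leq_double 2) in k2; apply: leq_trans k2.
have r0 := rn_gt0 n3.
set r := rn R (k.*2) in r0.
pose e0 := mkrow (1 / (2 * r)) 0 (1 / 2).
pose M := fun x : 'I_2 => if val x == 0%N then e0 else unit_effect R - e0.
have d0 : forall m, dot e0 (vertex R (k.*2) m) = (1 + cos (th (k.*2) m)) / 2.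
  by move=> m; rewrite dot_mkrow -/r; field; rewrite gt_eqF.
have d1 : forall m, dot (unit_effect R - e0) (vertex R (k.*2) m) = (1 - cos (th (k.*2) m)) / 2.
  by move=> m; rewrite dotv !mxE /= -/r; field; rewrite gt_eqF.
have hM : is_measurement (k.*2) M.
  apply: meas_of => //.
    move=> x m; rewrite /M; case: ifP => _; [rewrite d0 | rewrite d1].
      by have := cos_geN1 (th (k.*2) m); lra.
    by have := cos_le1 (th (k.*2) m); lra.
  rewrite big_ord_recr big_ord1 /M /=.
  by rewrite addrC subrK.
exists 2%N, M; split => //.
rewrite /decoding_power big_ord_recr big_ord1 /M /=.
have h1 := fnorm_ge 0 n0 (hM.1 ord0).
have h2 := fnorm_ge k n0 (hM.1 ord_max).
rewrite /M /= d0 in h1; rewrite /M /= d1 in h2.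
have : th (k.*2) k = pi.
  by rewrite /th -mul2n natrM; field; rewrite pnatr_eq0 -lt0n.
move: h1 h2; rewrite /th mulr0 !mul0r cos0 => h1 h2 E.
rewrite E cospi in h2; lra.
Qed.


Lemma sum_cos_th n : (3 <= n)%N -> \sum_(j < n) cos (th n j.+1) = 0.
Proof.
move=> n3; have [_ _ _ _ s0] := al_facts n3.
have n0 : n%:R != 0 :> R by rewrite pnatr_eq0 -lt0n; apply: leq_trans n3.
apply: (@mulfI _ (sin (al n) * 2)); first by rewrite mulf_neq0 ?gt_eqF.
rewrite mulr0 mulr_sumr.
pose g j := sin ((2 * j%:R + 1) * al n).
rewrite (eq_bigr (fun j : 'I_n => g j.+1 - g j)).
  rewrite -(big_mkord xpredT (fun j => g j.+1 - g j)) telescope_sumr //.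
  rewrite /g mulr0 add0r mul1r.
  have -> : (2 * n%:R + 1) * al n = al n + pi *+ 2.
    by rewrite /al -mulr_natr; field.
  by rewrite sinD2pi subrr.
move=> j _; rewrite /g.
have -> : (2 * (j.+1)%:R + 1) * al n = th n j.+1 + al n.
  by rewrite /th /al -addn1 natrD; field.
have -> : (2 * j%:R + 1) * al n = th n j.+1 - al n.
  by rewrite /th /al -addn1 natrD; field.
rewrite sinD sinB; ring.
Qed.


Lemma sum_sin_th n : (3 <= n)%N -> \sum_(j < n) sin (th n j.+1) = 0.
Proof.
move=> n3; have [_ _ _ _ s0] := al_facts n3.
have n0 : n%:R != 0 :> R by rewrite pnatr_eq0 -lt0n; apply: leq_trans n3.
apply: (@mulfI _ (sin (al n) * 2)); first by rewrite mulf_neq0 ?gt_eqF.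
rewrite mulr0 mulr_sumr.
pose g j := - cos ((2 * j%:R + 1) * al n).
rewrite (eq_bigr (fun j : 'I_n => g j.+1 - g j)).
  rewrite -(big_mkord xpredT (fun j => g j.+1 - g j)) telescope_sumr //.
  rewrite /g mulr0 add0r mul1r.
  have -> : (2 * n%:R + 1) * al n = al n + pi *+ 2.
    by rewrite /al -mulr_natr; field.
  by rewrite cosD2pi opprK addrC subrr.
move=> j _; rewrite /g.
have -> : (2 * (j.+1)%:R + 1) * al n = th n j.+1 + al n.
  by rewrite /th /al -addn1 natrD; field.
have -> : (2 * j%:R + 1) * al n = th n j.+1 - al n.
  by rewrite /th /al -addn1 natrD; field.
rewrite cosD cosB; ring.
Qed.

Lemma cos_key n d : odd n -> (3 <= n)%N -> (d.*2 < n)%N -> - cos (al n) <= cos (th n d).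
Proof.
move=> on n3 dn.
have [a0 _ _ _ _] := al_facts n3.
have n0 : (0 : R) < n%:R by rewrite ltr0n; apply: leq_trans n3.
have hpi := pi_gt0 R.
have -> : - cos (al n) = cos (pi - al n) by rewrite cosB cospi sinpi; ring.
have dn' : (d.*2.+1 <= n)%N by [].
have dn'' : (2 * d%:R + 1 <= n%:R :> R).
  by rewrite -(natrM R 2 d) natr1 ler_nat mul2n.
have E : pi - al n - th n d = (n%:R - 1 - 2 * d%:R) * (pi / n%:R).
  by rewrite /al /th; field; rewrite gt_eqF.
have t0 : 0 <= th n d by rewrite /th !mulr_ge0 ?ler0n ?invr_ge0 ?ltW.
have t1 : th n d <= pi - al n.
  rewrite -subr_ge0 E; apply: mulr_ge0; first lra.
  by rewrite divr_ge0 // ltW.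
rewrite leNgt ltr_cos ?in_itv /= ?t0 -?leNgt //.
- by apply/andP; split; lra.
- by apply/andP; split; lra.
Qed.


Lemma cos_th_mod n a y : (0 < n)%N -> cos (th n a - y) = cos (th n (a %% n) - y).
Proof.
move=> n0; rewrite {1}(divn_eq a n); elim: (a %/ n)%N => [|q IH]; first by rewrite mul0n add0n.
rewrite mulSn -addnA addnC th_per // -IH.
by rewrite addrAC cosD2pi.
Qed.


Lemma cos_key2 n d : odd n -> (3 <= n)%N -> (d < n)%N -> - cos (al n) <= cos (th n d).
Proof.
move=> on n3 dn.
case: (ltnP d.*2 n) => h; first exact: cos_key.
have h' : (n < d.*2)%N.
  rewrite ltn_neqAle h andbT; apply/negP => /eqP E.
  by move: on; rewrite E odd_double.
have E : th n d = pi *+ 2 - th n (n - d).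
  rewrite /th natrB; last exact: ltnW.
  rewrite -mulr_natr; field.
  by rewrite pnatr_eq0 -lt0n; apply: leq_trans n3.
rewrite E -[_ - _]addrC cosD2pi cosN; apply: cos_key => //.
lia.
Qed.


Lemma cos_sym (x y : R) : cos (x - y) = cos (y - x).
Proof. by rewrite -[LHS]cosN opprB. Qed.

Lemma cos_diff n a b : odd n -> (3 <= n)%N -> - cos (al n) <= cos (th n a - th n b).
Proof.
move=> on n3; have n0 : (0 < n)%N by apply: leq_trans n3.
rewrite cos_th_mod // cos_sym cos_th_mod // cos_sym.
have ha : (a %% n < n)%N by rewrite ltn_mod.
have hb : (b %% n < n)%N by rewrite ltn_mod.
move: (a %% n)%N (b %% n)%N ha hb => {}a {}b ha hb.
wlog ab : a b ha hb / (b <= a)%N.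
  move=> W; case: (leqP b a) => h; first exact: W.
  by rewrite cos_sym; apply: W => //; apply: ltnW.
have -> : th n a - th n b = th n (a - b).
  by rewrite /th natrB //; field; rewrite pnatr_eq0 -lt0n.
apply: cos_key2 => //; lia.
Qed.


Lemma lb_odd n : odd n -> (3 <= n)%N ->
  exists k' (M : 'I_k' -> 'rV[R]_3), is_measurement n M /\
     1 + 1 / cos (pi / n%:R) <= decoding_power n M.
Proof.
move=> on n3.
have n0 : (0 < n)%N by apply: leq_trans n3.
have nR : n%:R != 0 :> R by rewrite pnatr_eq0 -lt0n.
have [_ _ t0 _ _] := al_facts n3.
have r0 := rn_gt0 n3.
set r := rn R n in r0; set t := cos (al n) in t0.
pose M := fun j : 'I_n => mkrow (cos (th n j.+1) / (n%:R * t * r))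
   (sin (th n j.+1) / (n%:R * t * r)) (1 / n%:R).
have dM : forall j m, dot (M j) (vertex R n m) = (cos (th n j.+1 - th n m) / t + 1) / n%:R.
  move=> j m; rewrite dot_mkrow cosB -/r; field.
  by rewrite nR !gt_eqF.
have hM : is_measurement n M.
  apply: meas_of => //.
    move=> x m; rewrite dM divr_ge0 ?ler0n //.
    have := cos_diff x.+1 m on n3; rewrite -/t => h.
    have -> : cos (th n x.+1 - th n m) / t + 1 = (cos (th n x.+1 - th n m) + t) / t.
      by field; rewrite gt_eqF.
    by apply: divr_ge0; [lra | exact: ltW].
  apply/rowP => i; rewrite summxE.
  under eq_bigr => j _ do rewrite mxE.
  rewrite mxE; case: i => [[|[|[|//]]] hi] /=.
  - by rewrite -mulr_suml sum_cos_th // mul0r.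
  - by rewrite -mulr_suml sum_sin_th // mul0r.
  - by rewrite sumr_const card_ord -[LHS]mulr_natr; field.
exists n, M; split => //.
rewrite /decoding_power.
apply: (@le_trans _ _ (\sum_(j < n) ((1 / t + 1) / n%:R))).
  rewrite sumr_const card_ord -[X in _ <= X]mulr_natr.
  have -> : (1 / t + 1) / n%:R * n%:R = 1 + 1 / cos (pi / n%:R).
    by rewrite /t /al; field; rewrite nR gt_eqF.
  exact: lexx.
apply: ler_sum => j _; apply: (le_trans _ (fnorm_ge j.+1 n0 (hM.1 j))).
by rewrite dM subrr cos0.
Qed.

End Aux.

Theorem corollary3 (R : realType) (n : nat) : (3 <= n)%N ->
  (~~ odd n -> storability R n = 2) /\
  (odd n -> storability R n = 1 + 1 / cos (pi / n%:R) /\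
            2 < 1 + 1 / cos (pi / (n%:R : R))).
Proof.
move=> n3; have hn := odd_double_half n.
split => on.
  rewrite (negbTE on) add0n in hn; rewrite -hn.
  have k2 : (2 <= n./2)%N by lia.
  have k0 : (0 < n./2)%N by lia.
  apply: stor_eq; first by rewrite double_gt0.
    by move=> e he m; exact: ub_even.
  exact: lb_even.
rewrite on in hn.
have [_ _ t0 t1 _] := al_facts R n3.
split.
  apply: stor_eq; first by apply: leq_trans n3.
    move=> e he m; rewrite -hn in he *; apply: ub_odd => //; lia.
  exact: lb_odd.
rewrite /al in t0 t1.
have : (1 : R) < 1 / cos (pi / n%:R) by rewrite ltr_pdivlMr // mul1r.
lra.
Qed.
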